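(* Let $\mathcal K_{\texttt{SFL}}$ be a nonempty finite set of clients, and for each $\tilde k\in\mathcal K_{\texttt{SFL}}$ let $$a_{\tilde k}=I_{\tilde k}|\mathcal B_{\tilde k}|(F^{\mathrm S}_{\tilde k}+B^{\mathrm S}_{\tilde k})>0,\qquad c_{\tilde k}=\frac{I_{\tilde k}|\mathcal B_{\tilde k}|(F^{\mathrm C}_{\tilde k}+B^{\mathrm C}_{\tilde k})}{f^{\mathrm C}_{\tilde k}}+2\,\frac{I_{\tilde k}|\mathcal B_{\tilde k}|\Lambda_{\tilde k}+|\mathbf w^{\mathrm C}_{\tilde k}|}{r_{\tilde k}}.$$ For $F^{\max}>0$, let $T_\theta=T_\theta(F^{\max})>\max_{\tilde k}c_{\tilde k}$ be defined by the equation $$\sum_{\tilde k\in\mathcal K_{\texttt{SFL}}}\frac{a_{\tilde k}}{T_\theta-c_{\tilde k}}=F^{\max}.$$ Then $T_\theta$ is strictly convex with respect to $F^{\max}$.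
   Context: Split federated learning setting: $F^{\max}$ is the total computing power of the server; for each client $\tilde k$, $I_{\tilde k}$ is the number of local epochs, $|\mathcal B_{\tilde k}|$ the mini-batch size, $F^{\mathrm C}_{\tilde k},B^{\mathrm C}_{\tilde k}\geqslant 0$ and $F^{\mathrm S}_{\tilde k},B^{\mathrm S}_{\tilde k}\geqslant 0$ the per-sample forward/backward computation of the client-side and server-side models, $f^{\mathrm C}_{\tilde k}>0$ the client computing power, $r_{\tilde k}>0$ the data rate, $\Lambda_{\tilde k}\geqslant0$ the per-sample intermediate-result size and $|\mathbf w^{\mathrm C}_{\tilde k}|\geqslant 0$ the client-side model size. $T_\theta$ is the common latency of the clients in $\mathcal K_{\texttt{SFL}}$ when the server's resources are fully allocated among them. *)

(* Defs.v *)
From mathcomp Require Import all_boot all_order all_algebra.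
Set Implicit Arguments. Unset Strict Implicit. Unset Printing Implicit Defensive.
Import Order.TTheory GRing.Theory Num.Theory.
Local Open Scope ring_scope.

Definition sfl_a (R : realFieldType) (I Bsz : nat) (FS BS : R) : R :=
  (I%:R * Bsz%:R) * (FS + BS).

Definition sfl_c (R : realFieldType) (I Bsz : nat) (FC BC fC Lam w r : R) : R :=
  (I%:R * Bsz%:R) * (FC + BC) / fC + 2 * ((I%:R * Bsz%:R) * Lam + w) / r.

Definition strictly_convex_pos (R : realFieldType) (f : R -> R) : Prop :=
  forall x y t : R, 0 < x -> 0 < y -> x != y -> 0 < t -> t < 1 ->
    f (t * x + (1 - t) * y) < t * f x + (1 - t) * f y.

(* Main.v *)
Require Import Defs.
From mathcomp Require Import all_boot all_order all_algebra.
From mathcomp Require Import ring lra.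
Import Order.TTheory GRing.Theory Num.Theory.
Local Open Scope ring_scope.

Lemma term_convex (R : realFieldType) (a p q t : R) :
  0 < a -> 0 < p -> 0 < q -> p != q -> 0 < t -> t < 1 ->
  a / (t * p + (1 - t) * q) < t * (a / p) + (1 - t) * (a / q).
Proof.
move=> a0 p0 q0 pq t0 t1.
have ht : 0 < 1 - t by rewrite subr_gt0.
have s0 : 0 < t * p + (1 - t) * q.
  by apply: addr_gt0; apply: mulr_gt0.
rewrite -subr_gt0.
have -> : t * (a / p) + (1 - t) * (a / q) - a / (t * p + (1 - t) * q)
  = (a * t * (1 - t) * (p - q) ^+ 2) / (p * q * (t * p + (1 - t) * q)).
  by field; rewrite ?gt_eqF // ?mulr_gt0.
have h2 : 0 < (p - q) ^+ 2.
  by rewrite lt_neqAle eq_sym sqrf_eq0 subr_eq0 pq sqr_ge0.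
apply: divr_gt0.
  by apply: mulr_gt0 => //; apply: mulr_gt0 => //; apply: mulr_gt0.
by apply: mulr_gt0 => //; apply: mulr_gt0.
Qed.

Lemma term_mono (R : realFieldType) (a p q : R) :
  0 < a -> 0 < p -> p <= q -> a / q <= a / p.
Proof.
move=> a0 p0 pq; have q0 : 0 < q by apply: lt_le_trans pq.
apply: ler_wpM2l; first exact: ltW.
by rewrite lef_pV2 ?posrE.
Qed.

Theorem lemma5 (R : realFieldType) (n : nat)
  (I Bsz : 'I_n.+1 -> nat)
  (FC BC FS BS fC r Lam w : 'I_n.+1 -> R)
  (hFC : forall k, 0 <= FC k) (hBC : forall k, 0 <= BC k)
  (hFS : forall k, 0 <= FS k) (hBS : forall k, 0 <= BS k)
  (hfC : forall k, 0 < fC k) (hr : forall k, 0 < r k)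
  (hLam : forall k, 0 <= Lam k) (hw : forall k, 0 <= w k)
  (ha : forall k, 0 < sfl_a (I k) (Bsz k) (FS k) (BS k))
  (T : R -> R)
  (hTc : forall Fmax, 0 < Fmax -> forall k,
      sfl_c (I k) (Bsz k) (FC k) (BC k) (fC k) (Lam k) (w k) (r k) < T Fmax)
  (hTeq : forall Fmax, 0 < Fmax ->
      \sum_(k < n.+1) sfl_a (I k) (Bsz k) (FS k) (BS k)
         / (T Fmax - sfl_c (I k) (Bsz k) (FC k) (BC k) (fC k) (Lam k) (w k) (r k))
      = Fmax) :
  strictly_convex_pos T.
Proof.
move=> x y t x0 y0 xy t0 t1.
set a := fun k => sfl_a (I k) (Bsz k) (FS k) (BS k).
set c := fun k => sfl_c (I k) (Bsz k) (FC k) (BC k) (fC k) (Lam k) (w k) (r k).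
pose G s := \sum_(k < n.+1) a k / (s - c k).
have hG : forall F, 0 < F -> G (T F) = F by move=> F /hTeq.
have hc : forall F, 0 < F -> forall k, 0 < T F - c k.
  by move=> F F0 k; rewrite subr_gt0; apply: hTc.
have ht : 0 < 1 - t by rewrite subr_gt0.
set z := t * x + (1 - t) * y.
have z0 : 0 < z by apply: addr_gt0; apply: mulr_gt0.
set u := T x; set v := T y.
have uv : u != v.
  apply/negP => /eqP E; move/negP: xy; apply; apply/eqP.
  by rewrite -(hG _ x0) -(hG _ y0) -/u -/v E.
set W := t * u + (1 - t) * v.
have hW : forall k, W - c k = t * (u - c k) + (1 - t) * (v - c k).
  by move=> k; rewrite /W; ring.
have GW : G W < z.
  rewrite /z -(hG _ x0) -(hG _ y0) -/u -/v /G !mulr_sumr -big_split /=.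
  apply: ltr_sum; first by apply/hasP; exists ord0; rewrite ?mem_index_enum.
  move=> k _; rewrite hW; apply: term_convex; try exact: hc; rewrite // ?x0 ?y0.
  - exact: ha.
  - by rewrite (can_eq (subrK (c k))).
rewrite ltNge; apply/negP => hle.
move: GW; rewrite -(hG _ z0) ltNge => /negP; apply.
apply: ler_sum => k _; apply: term_mono; [exact: ha | idtac | ].
  by rewrite hW; apply: addr_gt0; apply: mulr_gt0 => //; apply: hc.
by apply: lerD hle (lexx _).
Qed.
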